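(* Let $m>2$ be an odd integer, $n\ge 1$ an integer, and let $M_{2mn}=\langle a,b : a^m=b^{2n}=1,\ bab^{-1}=a^{-1}\rangle$ be the metacyclic group of order $2mn$. Let $\Gamma_{M_{2mn}}$ be its non-commuting graph. Then the spectrum of the distance matrix $D(\Gamma_{M_{2mn}})$ (eigenvalues counted with multiplicity, multiplicities being added if two of the listed values coincide) consists of: (a) $-2$ with multiplicity $2mn-(m+n)-1$; (b) $n-2$ with multiplicity $m-1$; (c) $\frac{-(4+n-3mn)+n\sqrt{5m^2-10m+9}}{2}$ and $\frac{-(4+n-3mn)-n\sqrt{5m^2-10m+9}}{2}$, each with multiplicity $1$.
   Context: For a finite non-abelian group $G$ with centre $Z(G)$, the non-commuting graph $\Gamma_G$ is the simple undirected graph with vertex set $G\setminus Z(G)$, in which two distinct vertices $u,v$ are adjacent if and only if $uv\ne vu$. For a connected graph $H$, $d_{uv}$ denotes the length of a shortest path between vertices $u$ and $v$, and the distance matrix $D(H)$ is the matrix whose $(u,v)$-entry is $d_{uv}$. *)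

(* Defs.v *)
From HB Require Import structures.
From mathcomp Require Import all_boot all_order all_algebra all_fingroup all_solvable all_field.
Set Implicit Arguments. Unset Strict Implicit. Unset Printing Implicit Defensive.
Import GRing.Theory Num.Theory.

Local Open Scope group_scope.

Section NonCommutingGraph.
Variable gT : finGroupType.

Definition nc_vertices (G : {group gT}) : {set gT} := G :\: 'Z(G).

(* Adjacency: both endpoints are vertices and they do not commute
   (non-commuting elements are automatically distinct). *)
Definition nc_adj (G : {group gT}) : rel gT :=
  fun x y => [&& x \in nc_vertices G, y \in nc_vertices G & x * y != y * x].

Fixpoint nc_walk (G : {group gT}) (k : nat) (x y : gT) : bool :=
  match k with
  | 0 => x == y
  | k'.+1 => [exists z, nc_adj G x z && nc_walk G k' z y]
  end.

(* Graph distance d_{xy}: the least k such that there is a walk of length k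
   from x to y (searched among 0 .. #|gT|-1, which contains all shortest-path
   lengths of any graph on a subset of gT; the fallback value #|gT| is never
   reached for a connected graph). *)
Definition nc_dist (G : {group gT}) (x y : gT) : nat :=
  find (fun k => nc_walk G k x y) (iota 0 #|gT|).

Definition nc_dist_mx (G : {group gT}) : 'M[algC]_(#|nc_vertices G|) :=
  (\matrix_(i, j) (nc_dist G (enum_val i) (enum_val j))%:R)%R.

End NonCommutingGraph.

(* Main.v *)
From HB Require Import structures.
From mathcomp Require Import all_boot all_order all_algebra all_fingroup all_solvable all_field zify.
Require Import Defs.
From mathcomp Require Import ring.
Import GRing.Theory Num.Theory.

Section Dist.
Local Open Scope group_scope.
Variables (gT : finGroupType) (G : {group gT}).

Lemma notZ z w : w \in G -> z * w != w * z -> z \notin 'Z(G).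
Proof. move=> wG ne; apply/negP => /centerP [_ c]; by rewrite (c w wG) eqxx in ne. Qed.

Lemma ex_noncomm x : x \in nc_vertices G -> exists2 z, z \in G & x * z != z * x.
Proof.
rewrite inE => /andP [xnZ xG]; apply/exists_inP; rewrite -negb_forall_in.
apply: contra xnZ => /forall_inP h; apply/centerP; split => // z zG; exact/eqP/h.
Qed.

Lemma adjE x y : x \in nc_vertices G -> y \in nc_vertices G -> nc_adj G x y = (x * y != y * x).
Proof. by move=> xV yV; rewrite /nc_adj xV yV. Qed.

Lemma inV z w : z \in G -> w \in G -> z * w != w * z -> z \in nc_vertices G.
Proof. move=> zG wG ne; by rewrite inE zG (notZ _ _ wG ne). Qed.

Lemma common x y : x \in nc_vertices G -> y \in nc_vertices G ->
  exists z, nc_adj G x z && nc_adj G z y.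
Proof.
move=> xV yV.
have xG : x \in G by move: xV; rewrite inE => /andP[].
have yG : y \in G by move: yV; rewrite inE => /andP[].
have [z1 z1G h1] := ex_noncomm _ xV.
have [z2 z2G h2] := ex_noncomm _ yV.
have z1V : z1 \in nc_vertices G by apply: (inV _ _ z1G xG); rewrite eq_sym.
have z2V : z2 \in nc_vertices G by apply: (inV _ _ z2G yG); rewrite eq_sym.
case c1 : (y * z1 != z1 * y).
  exists z1; rewrite !adjE // h1 /=; by rewrite eq_sym.
case c2 : (x * z2 != z2 * x).
  exists z2; rewrite !adjE // c2 /=; by rewrite eq_sym.
move/negbFE/eqP: c1 => c1; move/negbFE/eqP: c2 => c2.
have n1 : x * (z1 * z2) != (z1 * z2) * x.
  apply/negP => /eqP e; move/negP: h1; apply; apply/eqP.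
  have : commute x (z1 * z2 * z2^-1) by apply: commuteM => //; apply: commuteV.
  by rewrite mulgK.
have n2 : y * (z1 * z2) != (z1 * z2) * y.
  apply/negP => /eqP e; move/negP: h2; apply; apply/eqP.
  have : commute y (z1^-1 * (z1 * z2)) by apply: commuteM => //; apply: commuteV.
  by rewrite mulKg.
have zG : z1 * z2 \in G by rewrite groupM.
have zV : z1 * z2 \in nc_vertices G by apply: (inV _ _ zG xG); rewrite eq_sym.
exists (z1 * z2); rewrite !adjE // n1 /=; by rewrite eq_sym.
Qed.

Lemma ncdistE x y : (2 < #|gT|)%N -> x \in nc_vertices G -> y \in nc_vertices G ->
  nc_dist G x y = if x == y then 0%N else if x * y != y * x then 1%N else 2%N.
Proof.
move=> big xV yV; rewrite /nc_dist.
have -> : #|gT| = (#|gT| - 3).+3 by lia.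
rewrite /=.
have w1 : [exists z, nc_adj G x z && (z == y)] = nc_adj G x y.
  apply/existsP/idP => [[z /andP [h /eqP <-]] // | h]; by exists y; rewrite h eqxx.
have w2 : [exists z, nc_adj G x z && [exists z0, nc_adj G z z0 && (z0 == y)]].
  have [z /andP [h1 h2]] := common _ _ xV yV.
  apply/existsP; exists z; rewrite h1 /=; apply/existsP; exists y; by rewrite h2 eqxx.
rewrite w1 w2 adjE //.
by case: (x == y); case: (x * y != y * x).
Qed.
End Dist.
Lemma oddP' m : odd m -> exists t, m = 2 * t + 1.
Proof. move=> om; exists m./2; rewrite -{1}(odd_double_half m) om -mul2n; lia. Qed.

Lemma ar_eo i k m : odd m -> i < m -> (i + k == k + (m - i) %[mod m]) = (i == 0).
Proof.
move=> /oddP' [t ->] im; rewrite addnC eqn_modDl.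
case: (posnP i) => [->|ip]; first by rewrite subn0 modnn mod0n.
rewrite !modn_small; lia.
Qed.

Lemma ar_oe i k m : odd m -> k < m -> (i + (m - k) == k + i %[mod m]) = (k == 0).
Proof. move=> om km; rewrite eq_sym; exact: ar_eo. Qed.

Lemma ar_oo i k m : odd m -> i < m -> k < m -> (i + (m - k) == k + (m - i) %[mod m]) = (i == k).
Proof.
move=> /oddP' [t ->] im km.
case: (ltngtP i k) => h.
- have -> : k + (2 * t + 1 - i) = (k - i) + (2 * t + 1) by lia.
  rewrite modnDr !modn_small; lia.
- have -> : i + (2 * t + 1 - k) = (i - k) + (2 * t + 1) by lia.
  rewrite modnDr !modn_small; lia.
- by rewrite h eqxx.
Qed.

Definition cond (i : nat) (oj : bool) (k : nat) (ol : bool) :=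
  if oj then (if ol then i == k else k == 0) else (if ol then i == 0 else true).

Section Grp.
Local Open Scope group_scope.
Variables (gT : finGroupType) (G : {group gT}) (a b : gT) (m n : nat).
Hypotheses (mo : odd m) (m2 : (2 < m)%N) (n1 : (1 <= n)%N)
  (HG : (G : {set gT}) = <<[set a; b]>>) (am : a ^+ m = 1) (bn : b ^+ (2 * n) = 1)
  (bab : b * a * b^-1 = a^-1) (cG : #|G| = (2 * m * n)%N).

Lemma ba : b * a = a^-1 * b.
Proof. by rewrite -bab mulgKV. Qed.

Lemma bai : b * a^-1 = a * b.
Proof. apply: (@mulIg _ a). by rewrite mulgKV -mulgA ba mulKVg. Qed.

Lemma bak k : b * a ^+ k = a ^- k * b.
Proof.
elim: k => [|k IH]; first by rewrite !expg0 invg1 mulg1 mul1g.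
by rewrite expgSr mulgA IH -mulgA ba mulgA -invMg -expgS expgSr.
Qed.

Lemma baik k : b * a ^- k = a ^+ k * b.
Proof.
elim: k => [|k IH]; first by rewrite !expg0 invg1 mulg1 mul1g.
by rewrite expgSr invMg mulgA bai -mulgA IH mulgA -expgS expgSr.
Qed.

Lemma bjak j k : b ^+ j * a ^+ k = (if odd j then a ^- k else a ^+ k) * b ^+ j.
Proof.
elim: j => [|j IH]; first by rewrite expg0 mul1g mulg1.
rewrite expgS -mulgA IH /=; case: (odd j) => /=; rewrite mulgA ?baik ?bak -mulgA //.
Qed.

Lemma ainv k : (k <= m)%N -> a ^- k = a ^+ (m - k).
Proof. move=> km; apply: (@mulIg _ (a ^+ k)); by rewrite mulVg -expgD subnK // am. Qed.

Lemma prodE i j k l : a ^+ i * b ^+ j * (a ^+ k * b ^+ l) =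
   a ^+ i * (if odd j then a ^- k else a ^+ k) * b ^+ (j + l).
Proof. by rewrite expgD !mulgA -(mulgA (a ^+ i)) bjak !mulgA. Qed.

Lemma comm_gen i j k l : (i < m)%N -> (k < m)%N -> #[a] = m ->
  (a ^+ i * b ^+ j * (a ^+ k * b ^+ l) == a ^+ k * b ^+ l * (a ^+ i * b ^+ j))
  = cond i (odd j) k (odd l).
Proof.
move=> im km oa; rewrite !prodE [(l + j)%N]addnC (inj_eq (@mulIg _ _)) /cond.
case: (odd j); case: (odd l); rewrite ?ainv ?(ltnW im) ?(ltnW km) // -!expgD eq_expg_mod_order oa.
- exact: ar_oo.
- exact: ar_oe.
- exact: ar_eo.
- by rewrite addnC eqxx.
Qed.


Lemma m0 : (0 < m)%N. Proof. by apply: ltn_trans m2. Qed.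

Definition phi (p : 'I_m * 'I_n * bool) : gT := a ^+ p.1.1 * b ^+ (p.2 + 2 * p.1.2).

Lemma aG : a \in G. Proof. by rewrite HG mem_gen // !inE eqxx. Qed.
Lemma bG : b \in G. Proof. by rewrite HG mem_gen // !inE eqxx orbT. Qed.

Lemma phiG p : phi p \in G.
Proof. by rewrite groupM // groupX // ?aG ?bG. Qed.

Lemma surj x : x \in G -> exists p, x = phi p.
Proof.
move=> xG.
have nab : <[b]> \subset 'N(<[a]>).
  rewrite cycle_subG; apply/normP; rewrite -cycleJ.
  have -> : a ^ b = a^-1 by rewrite conjgE -bai mulKg.
  by rewrite cycleV.
have : x \in <[a]> <*> <[b]>.
  rewrite HG in xG; apply: (subsetP _ _ xG); rewrite gen_subG; apply/subsetP => y.
  rewrite !inE => /orP [] /eqP ->.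
  - apply: (subsetP (joing_subl _ _)); exact: cycle_id.
  - apply: (subsetP (joing_subr _ _)); exact: cycle_id.
rewrite norm_joinEr //; case/mulsgP => y z /cycleP [i ->] /cycleP [j ->] ->.
have n2 : (0 < 2 * n)%N by lia.
have jlt : ((j %% (2 * n))./2 < n)%N.
  by rewrite ltn_half_double -mul2n ltn_pmod.
exists (Ordinal (ltn_pmod i m0), Ordinal jlt, odd (j %% (2 * n))).
have oh r : (odd r + 2 * r./2)%N = r by rewrite mul2n odd_double_half.
by rewrite /phi /= oh (expg_mod i am) (expg_mod j bn).
Qed.

Lemma phi_img : phi @: setT = G.
Proof.
apply/eqP; rewrite eqEsubset; apply/andP; split; apply/subsetP => x.
- by case/imsetP => p _ ->; exact: phiG.
- by move=> /surj [p ->]; apply: imset_f; rewrite inE.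
Qed.

Lemma phi_inj : injective phi.
Proof.
have h : #|phi @: setT| == #|[set: 'I_m * 'I_n * bool]|.
  by rewrite phi_img cG cardsT !card_prod !card_ord card_bool; apply/eqP; lia.
move/imset_injP: h => inj p q e; apply: inj => //; by rewrite inE.
Qed.

Lemma ord_a : #[a] = m.
Proof.
have d : (#[a] %| m)%N by rewrite order_dvdn am.
have le := dvdn_leq m0 d.
case: (ltnP #[a] m) => h; last lia.
have e : phi (Ordinal h, Ordinal n1, false) = phi (Ordinal m0, Ordinal n1, false).
  by rewrite /phi /= expg_order expg0.
move/phi_inj/(congr1 (fun p => nat_of_ord p.1.1)): e => /= e0.
by have := order_gt0 a; rewrite e0.
Qed.

Lemma commE p q : (phi p * phi q == phi q * phi p) = cond p.1.1 p.2 q.1.1 q.2.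
Proof.
rewrite /phi comm_gen // ?ord_a //. 
by rewrite !oddD /= !addbF !addbb !addbF !oddb.
Qed.


Lemma m1 : (1 < m)%N. Proof. by apply: ltn_trans m2. Qed.

Lemma a_phi : a = phi (Ordinal m1, Ordinal n1, false).
Proof. by rewrite /phi /= muln0 expg1 expg0 mulg1. Qed.

Lemma b_phi : b = phi (Ordinal m0, Ordinal n1, true).
Proof. by rewrite /phi /= muln0 addn0 expg1 expg0 mul1g. Qed.

Definition inZ (p : 'I_m * 'I_n * bool) := (nat_of_ord p.1.1 == 0%N) && ~~ p.2.

Lemma centerE p : (phi p \in 'Z(G)) = inZ p.
Proof.
apply/centerP/idP.
- case=> _ c.
  have ca := c a aG; have cb := c b bG.
  rewrite a_phi in ca; rewrite b_phi in cb.
  move/eqP: ca; move/eqP: cb; rewrite /inZ !commE /cond /=; case: (p.2) => //=.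
  by rewrite andbT.
- move=> h; split; first exact: phiG.
  move=> y yG; have [q ->] := surj _ yG; apply/eqP; rewrite commE /cond; move: h; rewrite /inZ.
  case: (p.2) => /=; first by rewrite andbF.
  rewrite andbT => /eqP ->; by case: (q.2).
Qed.

Definition fidx (p : 'I_m * 'I_n * bool) : 'I_m.+1 := if p.2 then lift ord0 p.1.1 else ord0.

Lemma cond_fidx p q : ~~ inZ p -> ~~ inZ q -> cond p.1.1 p.2 q.1.1 q.2 = (fidx p == fidx q).
Proof.
rewrite /inZ /cond /fidx; case: (p.2); case: (q.2) => /=; rewrite ?andbT ?andbF //.
- move=> _ /negbTE ->; by rewrite eq_sym (negbTE (neq_lift _ _)).
- move=> /negbTE -> _; by rewrite (negbTE (neq_lift _ _)).
Qed.

Definition p0 : 'I_m * 'I_n * bool := (Ordinal m0, Ordinal n1, false).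
Definition fg (x : gT) : 'I_m.+1 := fidx (odflt p0 [pick p | phi p == x]).

Lemma fgE p : fg (phi p) = fidx p.
Proof.
rewrite /fg; case: pickP => [q /eqP e | h]; first by rewrite (phi_inj _ _ e).
by have := h p; rewrite eqxx.
Qed.

Lemma VE : nc_vertices G = phi @: [set p | ~~ inZ p].
Proof.
apply/setP => x; rewrite /nc_vertices in_setD; apply/andP/imsetP.
- case=> xnZ xG; have [p e] := surj _ xG; exists p => //.
  by rewrite inE -centerE -e.
- case=> p; rewrite inE => h ->; by rewrite centerE h phiG.
Qed.

Lemma commV x y : x \in nc_vertices G -> y \in nc_vertices G -> (x * y == y * x) = (fg x == fg y).
Proof.
rewrite VE => /imsetP [p hp ->] /imsetP [q hq ->]; rewrite commE !fgE cond_fidx //.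
- by move: hp; rewrite inE.
- by move: hq; rewrite inE.
Qed.

Lemma Zset : [set p | inZ p] = setX (setX [set Ordinal m0] setT) [set false].
Proof.
apply/setP => [[[i t] e]]; rewrite !inE /inZ /=; case: e; rewrite ?andbT ?andbF //.
Qed.

Lemma cardV : #|nc_vertices G| = (2 * m * n - n)%N.
Proof.
rewrite VE card_imset; last exact: phi_inj.
have := cardsC [set p | inZ p].
have -> : ~: [set p | inZ p] = [set p | ~~ inZ p] by apply/setP => p; rewrite !inE.
rewrite Zset !cardsX !cards1 cardsT !card_prod !card_ord card_bool; lia.
Qed.

Definition cnt (r : 'I_m.+1) : nat := if r == ord0 then (m.-1 * n)%N else n.

Lemma cnt_set r : #|[set p | ~~ inZ p && (fidx p == r)]| = cnt r.
Proof.
rewrite /cnt; case: (unliftP ord0 r) => [i -> | ->].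
- rewrite [lift _ _ == _]eq_sym (negbTE (neq_lift _ _)).
  have -> : [set p | ~~ inZ p && (fidx p == lift ord0 i)] = setX (setX [set i] setT) [set true].
    apply/setP => [[[k t] e]]; rewrite !inE /inZ /fidx /=; case: e => /=.
    + rewrite andbF /= !andbT; by apply/eqP/eqP => [/lift_inj | ->].
    + by rewrite (negbTE (neq_lift _ _)) andbF; case: (k == i).
  by rewrite !cardsX !cards1 cardsT card_ord mul1n muln1.
- rewrite eqxx.
  have -> : [set p | ~~ inZ p && (fidx p == ord0)] = setX (setX [set~ Ordinal m0] setT) [set false].
    apply/setP => [[[k t] e]]; rewrite !inE /inZ /fidx /=; case: e => /=.
    + by rewrite [lift _ _ == _]eq_sym (negbTE (neq_lift _ _)) andbF; case: (_ != _).
    + by rewrite eqxx !andbT.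
  by rewrite !cardsX cardsC1 cards1 cardsT !card_ord muln1.
Qed.

Local Open Scope ring_scope.
Lemma sum_cnt (R : nzRingType) r :
  \sum_(v < #|nc_vertices G|) ((fg (enum_val v) == r)%:R : R) = (cnt r)%:R.
Proof.
rewrite -(big_enum_val (fun x => ((fg x == r)%:R : R))) /=.
rewrite VE big_imset /=; last by move=> p q _ _; exact: phi_inj.
rewrite (eq_bigr (fun p => ((fidx p == r) : nat)%:R)); last by move=> p _; rewrite fgE.
rewrite -natr_sum.
rewrite (eq_bigr (fun p => if fidx p == r then 1%N else 0%N)); last by move=> p _; case: (fidx p == r).
rewrite -big_mkcondr sum1dep_card -cnt_set.
congr (_ %:R); apply: eq_card => p; by rewrite !inE.
Qed.

Lemma big_gT : (2 < #|gT|)%N.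
Proof. have := subset_leq_card (subsetT G); rewrite cG cardsT => h.
apply: leq_trans h; have := leq_mul (leq_mul (leqnn 2) m2) n1; lia. Qed.

Lemma sumdelta (R : nzRingType) K (c : 'I_K) (F : 'I_K -> R) :
  \sum_r (c == r)%:R * F r = F c.
Proof.
rewrite (bigD1 c) //= eqxx mul1r big1 ?addr0 // => r /negbTE.
by rewrite eq_sym => ->; rewrite mul0r.
Qed.

Lemma sumdelta1 (R : nzRingType) K (c : 'I_K) : \sum_r ((c == r)%:R : R) = 1.
Proof. rewrite -[RHS](sumdelta _ _ c (fun _ => 1)); apply: eq_bigr => r _; by rewrite mulr1. Qed.

Definition PR := {poly algC}.
Definition U : 'M[PR]_(#|nc_vertices G|, m.+1) := \matrix_(v, r) (fg (enum_val v) == r)%:R.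
Definition Mk : 'M[PR]_(m.+1) := 1%:M + const_mx 1.

Lemma UUt : U *m U^T = \matrix_(v, w) (fg (enum_val v) == fg (enum_val w))%:R.
Proof.
apply/matrixP => v w; rewrite !mxE.
rewrite (eq_bigr (fun r => (fg (enum_val v) == r)%:R * (fg (enum_val w) == r)%:R)); last first.
  by move=> r _; rewrite !mxE.
by rewrite sumdelta eq_sym.
Qed.

Lemma Ucst p : U *m (const_mx 1 : 'M_(m.+1, p)) = const_mx 1.
Proof.
apply/matrixP => v w; rewrite !mxE.
rewrite (eq_bigr (fun r => (fg (enum_val v) == r)%:R)); last by move=> r _; rewrite !mxE mulr1.
exact: sumdelta1.
Qed.

Lemma cstUt : (const_mx 1 : 'M_(m.+1)) *m U^T = const_mx 1.
Proof.
apply/matrixP => v w; rewrite !mxE.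
rewrite (eq_bigr (fun r => (fg (enum_val w) == r)%:R)); last by move=> r _; rewrite !mxE mul1r.
exact: sumdelta1.
Qed.

Lemma D2 : map_mx polyC (nc_dist_mx G) + 2%:M = U *m (Mk *m U^T).
Proof.
rewrite /Mk mulmxDl mul1mx cstUt mulmxDr UUt Ucst.
apply/matrixP => v w; rewrite !mxE.
have xV := enum_valP v; have yV := enum_valP w.
rewrite (ncdistE _ _ _ _ big_gT xV yV) -commV // (inj_eq enum_val_inj).
case: (eqVneq v w) => [->|ne] /=.
  by rewrite eqxx polyC0 add0r mulr1n /= mulr1n.
by case: eqP => _ /=; rewrite mulr0n addr0 polyC_natr ?add0r /= ?mulr1n.
Qed.

Lemma UtU : U^T *m U = \matrix_(r, q) ((r == q)%:R * (cnt q)%:R).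
Proof.
apply/matrixP => r q; rewrite !mxE.
rewrite (eq_bigr (fun v => (((fg (enum_val v) == r) && (fg (enum_val v) == q)) : nat)%:R)); last first.
  by move=> v _; rewrite !mxE -natrM mulnb.
case: (eqVneq r q) => [<-|ne].
- rewrite (_ : true%:R = 1) ?mul1r // -(sum_cnt _ r); apply: eq_bigr => v _; by rewrite andbb.
- rewrite (_ : false%:R = 0) ?mul0r // big1 // => v _.
  case: (eqVneq (fg (enum_val v)) r) => [->|nr]; first by rewrite /= (negbTE ne).
  by [].
Qed.

Definition d0 : PR := (m.-1 * n)%:R.
Definition U2 : 'M[PR]_(m.+1, 2) := \matrix_(p, c) (if c == ord0 then (p == ord0)%:R else 1).
Definition V2 : 'M[PR]_(2, m.+1) :=
  \matrix_(c, q) (if c == ord0 then (q == ord0)%:R * (d0 - n%:R) else (cnt q)%:R).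

Lemma MkUtU : Mk *m (U^T *m U) = (n%:R : PR)%:M + U2 *m V2.
Proof.
rewrite UtU /Mk mulmxDl mul1mx; apply/matrixP => p q; rewrite !mxE.
rewrite (eq_bigr (fun r => (q == r)%:R * (cnt q)%:R)); last first.
  by move=> r _; rewrite !mxE mul1r eq_sym.
rewrite sumdelta big_ord_recl big_ord1 !mxE /=.
case: (eqVneq p q) => [<-|ne].
- rewrite /cnt /d0; case: (p == ord0); rewrite /=; ring.
- case: (eqVneq q ord0) => [eq|nq].
  + have np : p != ord0 by rewrite -eq.
    rewrite /cnt (negbTE np) eq /d0 eqxx /=; ring.
  + rewrite /cnt (negbTE nq) /=; ring.
Qed.

Lemma liftne k (i : 'I_k) : (lift ord0 i == ord0 :> 'I_k.+1) = false.
Proof. by []. Qed.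

Lemma V2U2E : V2 *m U2 = \matrix_(c, c') (if c == ord0 then d0 - n%:R
   else (if c' == ord0 then d0 else d0 + (m * n)%:R)).
Proof.
apply/matrixP => c c'; rewrite !mxE big_ord_recl.
under eq_bigr do rewrite !mxE /cnt liftne.
rewrite !mxE /cnt eqxx.
case: (unliftP ord0 c) => [j ->|->]; case: (unliftP ord0 c') => [j' ->|->]; rewrite /= ?liftne /=.
- rewrite mulr1 (eq_bigr (fun _ => n%:R)); last by move=> *; rewrite mulr1.
  by rewrite sumr_const card_ord /d0 [(m * n)%:R]natrM mulr_natl.
- by rewrite ?mulr1 big1 ?addr0 // => *; rewrite ?mulr0.
- by rewrite ?mulr1 ?mul1r big1 ?addr0 // => *; rewrite ?mul0r.
- by rewrite ?mulr1 ?mul1r big1 ?addr0 // => *; rewrite ?mul0r.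
Qed.

Lemma det2 (R : comRingType) (A : 'M[R]_2) :
  \det A = A ord0 ord0 * A (lift ord0 ord0) (lift ord0 ord0) - A ord0 (lift ord0 ord0) * A (lift ord0 ord0) ord0.
Proof.
rewrite (expand_det_row _ ord0) !big_ord_recl big_ord0 addr0 /cofactor !det_mx11 !mxE /=.
rewrite !expr0 expr1 !mul1r.
have -> : lift ord0 (@ord0 0) = lift ord0 ord0 by [].
have -> : lift (lift ord0 ord0) (@ord0 0) = ord0 :> 'I_2 by apply/val_inj.
by rewrite mulN1r mulrN.
Qed.

Lemma sylvester (R : comRingType) (N k : nat) (A : 'M[R]_(N, k)) (B : 'M[R]_(k, N)) (s : R) :
  s ^+ k * \det (s%:M - A *m B) = s ^+ N * \det (s%:M - B *m A).
Proof.
pose Y := block_mx (s%:M : 'M_N) A B (1%:M : 'M_k).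
pose Z := block_mx (1%:M : 'M_N) A B (s%:M : 'M_k).
have dY : \det Y = \det (s%:M - A *m B).
  have -> : Y = block_mx (s%:M - A *m B) A 0 1%:M *m block_mx 1%:M 0 B 1%:M.
    rewrite mulmx_block !mul1mx !mulmx1 ?mul0mx ?mulmx0 ?addr0 ?add0r ?mulmxN ?subrK ?subrr.
    by [].
  by rewrite det_mulmx det_ublock det_lblock !det1 !mulr1.
have dZ : \det Z = \det (s%:M - B *m A).
  have -> : Z = block_mx 1%:M 0 B 1%:M *m block_mx 1%:M A 0 (s%:M - B *m A).
    rewrite mulmx_block !mul1mx !mulmx1 ?mul0mx ?mulmx0 ?addr0 ?add0r ?mulmxN ?addNr ?addrN.
    by rewrite addrC subrK.
  by rewrite det_mulmx det_ublock det_lblock !det1 !mul1r.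
have e : block_mx (s%:M : 'M_N) 0 0 (1%:M : 'M_k) *m Z = Y *m block_mx 1%:M 0 0 (s%:M : 'M_k).
  rewrite /Y /Z !mulmx_block !mul1mx !mulmx1 ?mul0mx ?mulmx0 ?addr0 ?add0r.
  by rewrite mul_scalar_mx mul_mx_scalar.
have := congr1 determinant e.
rewrite !det_mulmx dZ dY det_ublock det_ublock !det1 !det_scalar mulr1 mul1r => ->.
by rewrite mulrC.
Qed.

Lemma Qdet (t : PR) : \det (t%:M - V2 *m U2) =
  (t - (d0 - n%:R)) * (t - (d0 + (m * n)%:R)) - (d0 - n%:R) * d0.
Proof.
rewrite V2U2E det2 !mxE /=.
by rewrite mulr1n mulr0n !sub0r mulrNN.
Qed.
Definition Ec (mm nn : algC) : algC :=
  (2 - (mm - 1) * nn) * (2 - nn - (mm - 1) * nn - mm * nn) - ((mm - 1) * nn - nn) * ((mm - 1) * nn).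

Lemma quadE (mm nn : algC) :
  ('X - ((- (4 + nn - 3 * mm * nn) + nn * sqrtC (5 * mm ^+ 2 - 10 * mm + 9)) / 2)%:P)
  * ('X - ((- (4 + nn - 3 * mm * nn) - nn * sqrtC (5 * mm ^+ 2 - 10 * mm + 9)) / 2)%:P)
  = 'X ^+ 2 - (- (4 + nn - 3 * mm * nn))%:P * 'X + (Ec mm nn)%:P :> {poly algC}.
Proof.
set S := sqrtC _.
have hS : S ^+ 2 = 5 * mm ^+ 2 - 10 * mm + 9 by rewrite sqrtCK.
set T := - (4 + nn - 3 * mm * nn).
have e : forall x y : algC, ('X - x%:P) * ('X - y%:P) = 'X ^+ 2 - (x + y)%:P * 'X + (x * y)%:P :> {poly algC}.
  by move=> x y; rewrite polyCD polyCM; ring.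
rewrite e.
have -> : (T + nn * S) / 2 + (T - nn * S) / 2 = T by field.
have -> : (T + nn * S) / 2 * ((T - nn * S) / 2) = (T ^+ 2 - nn ^+ 2 * S ^+ 2) / 4 by field.
rewrite hS.
have -> : (T ^+ 2 - nn ^+ 2 * (5 * mm ^+ 2 - 10 * mm + 9)) / 4 = Ec mm nn.
  rewrite /T /Ec; field.
all: by [].
Qed.

Lemma final : char_poly (nc_dist_mx G) =
    (('X + 2%:P) ^+ (2 * m * n - (m + n) - 1)
     * ('X - (n%:R - 2)%:P) ^+ (m - 1)
     * ('X - ((- (4 + n%:R - 3 * m%:R * n%:R)
               + n%:R * sqrtC (5 * m%:R ^+ 2 - 10 * m%:R + 9)) / 2)%:P)
     * ('X - ((- (4 + n%:R - 3 * m%:R * n%:R)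
               - n%:R * sqrtC (5 * m%:R ^+ 2 - 10 * m%:R + 9)) / 2)%:P)).
Proof.
rewrite -mulrA quadE.
set s : PR := 'X + 2%:P.
set t : PR := 'X - (n%:R - 2)%:P.
have st : s - n%:R = t by rewrite /s /t rmorphB !rmorph_nat; ring.
have h1 := sylvester _ _ _ U (Mk *m U^T) s.
have e1 : s%:M - U *m (Mk *m U^T) = char_poly_mx (nc_dist_mx G).
  rewrite -D2 /char_poly_mx /s raddfD /= rmorph_nat opprD addrACA subrr addr0.
  by [].
have e2 : (Mk *m U^T) *m U = (n%:R : PR)%:M + U2 *m V2 by rewrite -mulmxA MkUtU.
have e3 : s%:M - ((n%:R : PR)%:M + U2 *m V2) = t%:M - U2 *m V2.
  by rewrite -st raddfB /= opprD addrA.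
have h2 := sylvester _ _ _ U2 V2 t.
rewrite e1 e2 e3 in h1; rewrite Qdet in h2.
rewrite /char_poly.
have m1c : ((m.-1)%:R : algC) = m%:R - 1 by rewrite -subn1 natrB; [by [] | exact: m0].
have m1p : ((m.-1)%:R : PR) = m%:R - 1 by rewrite -subn1 natrB; [by [] | exact: m0].
have hq : 'X ^+ 2 - (- (4 + n%:R - 3 * m%:R * n%:R))%:P * 'X + (Ec m%:R n%:R)%:P
   = (t - (d0 - n%:R)) * (t - (d0 + (m * n)%:R)) - (d0 - n%:R) * d0.
  rewrite /t /d0 /Ec !natrM m1p !(rmorphD, rmorphB, rmorphN, rmorphM, rmorphXn, rmorph_nat).
  ring.
rewrite hq.
have sne : s != 0 by rewrite /s monic_neq0 // monicXaddC.
have tne : t != 0 by rewrite /t monic_neq0 // monicXsubC.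
apply: (mulfI (x := s ^+ m.+1 * t ^+ 2)); first by rewrite mulf_neq0 // expf_neq0.
rewrite [s ^+ _ * t ^+ 2]mulrC -[LHS]mulrA h1 mulrCA h2.
have eN : #|nc_vertices G| = (m.+1 + (2 * m * n - (m + n) - 1))%N.
  rewrite cardV; have := leq_mul (leq_mul (leqnn 2) m2) n1; nia.
have eT : t ^+ m.+1 = t ^+ 2 * t ^+ (m - 1) by rewrite -exprD; congr (_ ^+ _); lia.
have sN : s ^+ #|nc_vertices G| = s ^+ m.+1 * s ^+ (2 * m * n - (m + n) - 1) by rewrite -exprD eN.
rewrite sN eT; ring.
Qed.
End Grp.

Theorem theorem6p1 (gT : finGroupType) (G : {group gT}) (a b : gT) (m n : nat) :
  odd m -> (2 < m)%N -> (1 <= n)%N ->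
  (G : {set gT}) = <<[set a; b]>>%g ->
  (a ^+ m = 1)%g -> (b ^+ (2 * n) = 1)%g -> (b * a * b^-1 = a^-1)%g ->
  #|G| = (2 * m * n)%N ->
  char_poly (nc_dist_mx G) =
    (('X + 2%:P) ^+ (2 * m * n - (m + n) - 1)
     * ('X - (n%:R - 2)%:P) ^+ (m - 1)
     * ('X - ((- (4 + n%:R - 3 * m%:R * n%:R)
               + n%:R * sqrtC (5 * m%:R ^+ 2 - 10 * m%:R + 9)) / 2)%:P)
     * ('X - ((- (4 + n%:R - 3 * m%:R * n%:R)
               - n%:R * sqrtC (5 * m%:R ^+ 2 - 10 * m%:R + 9)) / 2)%:P))%R.
Proof.
move=> mo m2 n1 HG am bn bab cG; exact: (@final gT G a b m n mo m2 n1 HG am bn bab cG).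
Qed.
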